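(* Let $G$ be a $6$-regular graph, $\mathcal S$ a canonical path partition of $G$, $P$ a path component, and $X=x_1x_2\cdots x_k$ ($k\ge 2$) a sequence of consecutive vertices of $P$, all belonging to $V_2^b$. Let $X'\subseteq X$ be the set of vertices of $X$ that go to at least one vertex of a cycle component. If $|X'|\ge 2$, then the vertices of $X'$ are consecutive on $P$, there is a single cycle component $C$ such that every cycle-component vertex that any vertex of $X'$ goes to lies in $C$, and, if $|V(C)|\le 6$, the number of balanced edges between $X'$ and $V(C)$ is at most $\frac{|X'|\cdot|V(C)|}{2}$.
   Context: All graphs are finite, simple and undirected. A path partition of $G=(V,E)$ is a set of vertex-disjoint paths (single vertices allowed) covering $V$; its members are components. A component with $t\ge3$ vertices is a cycle component if the subgraph induced on its vertex set has a spanning cycle; a one-vertex component is an isolated vertex; every other component is a path component. A path partition is canonical if (1) it has the minimum number of components among all path partitions of $G$; (2) among those, it has the maximum number of cycle components; (3) it has no isolated vertices. Given a canonical path partition $\mathcal S$ of $G$: two vertices are path neighbors if they are consecutive on a path component. An edge of $G$ is a free edge unless it joins two path neighbors or has both endpoints in the same cycle component. $V_1$ is the set of end-vertices of path components together with all vertices of cycle components. $V_2$ is the set of vertices not in $V_1$ that are joined by a free edge to a vertex of $V_1$. $V_2^b$ is the set of vertices of $V_2$ having at least one path neighbor in $V_2$. A balanced edge is a free edge with one endpoint in $V_1$ and the other in $V_2$; for $x\in V_2$, $y\in V_1$ we say $x$ goes to $y$ if $xy$ is a balanced edge. *)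

(* Defs.v *)
From mathcomp Require Import all_boot.
Set Implicit Arguments. Unset Strict Implicit. Unset Printing Implicit Defensive.

Section PathPartitions.
Variables (T : finType) (e : rel T).

Definition is_gpath (s : seq T) : bool :=
  if s is x :: s' then path e x s' else false.

Definition path_partition (S : seq (seq T)) : Prop :=
  all is_gpath S /\ uniq (flatten S) /\ (forall v : T, v \in flatten S).

Definition cycle_comp (s : seq T) : bool :=
  (2 < size s) && has (cycle e) (permutations s).

Definition isolated_comp (s : seq T) : bool := size s == 1.

Definition path_comp (s : seq T) : bool := (1 < size s) && ~~ cycle_comp s.

Definition ncycles (S : seq (seq T)) : nat := count cycle_comp S.

Definition canonical (S : seq (seq T)) : Prop :=
  [/\ path_partition S,
      (forall S', path_partition S' -> size S <= size S'),
      (forall S', path_partition S' -> size S' = size S -> ncycles S' <= ncycles S)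
    & ~~ has isolated_comp S].

Definition consec (s : seq T) (x y : T) : bool :=
  ((x, y) \in zip s (behead s)) || ((y, x) \in zip s (behead s)).

Variable S : seq (seq T).

Definition path_nb (x y : T) : bool := has (fun s => path_comp s && consec s x y) S.

Definition same_cycle_comp (x y : T) : bool :=
  has (fun s => [&& cycle_comp s, x \in s & y \in s]) S.

Definition in_cycle_comp (y : T) : bool := has (fun s => cycle_comp s && (y \in s)) S.

Definition free_edge (x y : T) : bool :=
  [&& e x y, ~~ path_nb x y & ~~ same_cycle_comp x y].

Definition V1 (x : T) : bool :=
  has (fun s => (path_comp s && ((x == head x s) || (x == last x s)))
                || (cycle_comp s && (x \in s))) S.

Definition V2 (x : T) : bool := ~~ V1 x && [exists y, V1 y && free_edge x y].

Definition V2b (x : T) : bool := V2 x && [exists y, path_nb x y && V2 y].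

Definition balanced (x y : T) : bool :=
  free_edge x y && ((V1 x && V2 y) || (V2 x && V1 y)).

Definition goes_to (x y : T) : bool := [&& V2 x, V1 y & balanced x y].

Definition Xprime (X : seq T) : {set T} :=
  [set x | (x \in X) && [exists y, goes_to x y && in_cycle_comp y]].

End PathPartitions.

(* Main.v *)
Require Import Defs.
From mathcomp Require Import all_boot zify.
Set Implicit Arguments. Unset Strict Implicit. Unset Printing Implicit Defensive.


Section Gp.
Variables (T : finType) (e : rel T).
Hypothesis e_sym : symmetric e.
Notation gp := (is_gpath e).

Lemma gp_cat s1 s2 y : gp s1 -> gp s2 -> e (last y s1) (head y s2) -> gp (s1 ++ s2).
Proof.
case: s1 => [//|x s1]; case: s2 => [//|z s2] /= h1 h2 h.
by rewrite cat_path h1 /= h h2.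
Qed.

Lemma gp_rev s : gp s -> gp (rev s).
Proof.
case: s => [//|x p] /= hp.
rewrite (lastI x p) rev_rcons /= rev_path.
by rewrite (@eq_path _ _ e) // => a b /=; apply: e_sym.
Qed.

Lemma gp_catl s1 s2 : gp (s1 ++ s2) -> s1 != [::] -> gp s1.
Proof. case: s1 => [//|x s1] /=; rewrite cat_path => /andP[] //. Qed.

Lemma gp_catr s1 s2 : gp (s1 ++ s2) -> s2 != [::] -> gp s2.
Proof.
case: s2 => [//|z s2] h _; case: s1 h => [//|x s1] /=.
by rewrite cat_path => /andP[_ /= /andP[]].
Qed.

Lemma gp_infix s t : gp s -> infix t s -> t != [::] -> gp t.
Proof.
move=> g /infixP[u [v hs]] ht; subst s.
have g2 := gp_catr g.
have : gp (t ++ v).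
  case: u g g2 => [|x u] g g2 //; apply: g2; by destruct t.
move=> g3; exact: gp_catl g3 ht.
Qed.

Lemma gp_nil s : gp s -> s != [::]. Proof. by case: s. Qed.

Lemma uniq_of_flat (L : seq (seq T)) : (forall s, s \in L -> s != [::]) ->
  uniq (flatten L) -> uniq L.
Proof.
elim: L => [//|s L IH] hne /=; rewrite cat_uniq => /and3P[us hdis uf].
rewrite IH ?andbT //; last by move=> t ht; apply: hne; rewrite inE ht orbT.
apply/negP => hs; have := hne s; rewrite inE eqxx => /(_ isT).
case: s hs hdis {us hne} => [//|x s] hs hdis _.
have hx : x \in flatten L by apply/flattenP; exists (x :: s) => //; rewrite inE eqxx.
by move/negP: hdis; apply; apply/hasP; exists x => //; rewrite inE eqxx.
Qed.

End Gp.

Section Part.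
Variables (T : finType) (e : rel T).
Hypothesis e_sym : symmetric e.
Variable S : seq (seq T).
Hypothesis canS : canonical e S.
Notation gp := (is_gpath e).

Lemma S_pp : path_partition e S. Proof. by case: canS. Qed.
Lemma S_gp s : s \in S -> gp s.
Proof. by case: S_pp => /allP h _; apply: h. Qed.
Lemma S_uf : uniq (flatten S). Proof. by case: S_pp => _ []. Qed.
Lemma S_uniq : uniq S.
Proof. apply: uniq_of_flat S_uf => s /S_gp; exact: gp_nil. Qed.

Lemma perm_decomp (Old : seq (seq T)) : uniq Old -> {subset Old <= S} ->
  perm_eq S (Old ++ filter (predC (mem Old)) S).
Proof.
move=> uO sub.
rewrite -{1}(perm_filterC (mem Old) S) perm_cat2r.
apply: uniq_perm; rewrite ?filter_uniq ?S_uniq // => s.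
rewrite mem_filter /=; apply/andP/idP => [[]//|h]; split => //; exact: sub.
Qed.

Lemma fewer (Old New : seq (seq T)) : uniq Old -> {subset Old <= S} ->
  all gp New -> perm_eq (flatten New) (flatten Old) -> size New < size Old -> False.
Proof.
move=> uO sub gN pf lt.
set R := filter (predC (mem Old)) S.
have pS := perm_decomp uO sub.
case: canS => [[gS [uS covS]] minS _ _].
have pf2 : perm_eq (flatten (New ++ R)) (flatten S).
  rewrite perm_sym; apply: perm_trans (perm_flatten pS) _.
  by rewrite !flatten_cat perm_cat2r perm_sym.
have pp : path_partition e (New ++ R).
  split; first by rewrite all_cat gN /=; apply/allP => s; rewrite mem_filter => /andP[_ hs]; apply: (allP gS).
  by split; [rewrite (perm_uniq pf2) | move=> v; rewrite (perm_mem pf2)].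
have := minS _ pp; rewrite (perm_size pS) !size_cat /R leq_add2r => h; by move: lt; rewrite ltnNge h.
Qed.

Lemma comp_unique s1 s2 y : s1 \in S -> s2 \in S -> y \in s1 -> y \in s2 -> s1 = s2.
Proof.
move=> h1 h2 y1 y2; apply/eqP/negPn/negP => ne.
have uO : uniq [:: s1; s2] by rewrite /= inE ne.
have sub : {subset [:: s1; s2] <= S} by move=> s; rewrite !inE => /orP[]/eqP->.
have := S_uf; rewrite (perm_uniq (perm_flatten (perm_decomp uO sub))) /=.
rewrite cat_uniq => /and3P[_ /hasPn h _]; move: (h y).
by rewrite !mem_cat y2 y1 /= => /(_ isT).
Qed.

Lemma cyc_path C y : cycle_comp e C -> y \in C ->
  exists t, perm_eq (y :: t) C /\ path e y t.
Proof.
case/andP=> _ /hasP[H0]; rewrite mem_permutations => pH cH yC.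
have yH : y \in H0 by rewrite (perm_mem pH).
case: (rot_to yH) => i t ht; exists t; split.
  by rewrite -ht (perm_rot i H0).
by move: cH; rewrite -(rot_cycle i) ht /= rcons_path => /andP[].
Qed.


Lemma last_rev' (x : T) s : last x (rev s) = head x s.
Proof. by case: s => //= y s; rewrite rev_cons last_rcons. Qed.
Lemma head_rev' (x : T) s : head x (rev s) = last x s.
Proof. by case/lastP: s => // s y; rewrite rev_rcons last_rcons. Qed.

Lemma last_nd (x y : T) s : s != [::] -> last x s = last y s.
Proof. by case: s. Qed.
Lemma head_nd (x y : T) s : s != [::] -> head x s = head y s.
Proof. by case: s. Qed.

Definition gc x := [exists y, goes_to e S x y && in_cycle_comp e S y].

Lemma V2_nV1 x : V2 e S x -> ~~ V1 e S x. Proof. by case/andP. Qed.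

Lemma gc_V2 x : gc x -> V2 e S x.
Proof. by case/existsP => y /andP[/and3P[]]. Qed.

Lemma V2_ex x : V2 e S x -> exists z, [/\ V1 e S z, e x z & (in_cycle_comp e S z -> gc x)].
Proof.
move=> hx; case/andP: (hx) => _ /existsP[z /andP[v1 fr]].
exists z; split => //; first by case/and3P: fr.
move=> ic; apply/existsP; exists z; rewrite ic andbT /goes_to hx v1 /balanced fr /=.
by rewrite hx v1 orbT.
Qed.

Lemma V1_cases z : V1 e S z -> in_cycle_comp e S z \/
  exists2 s, s \in S & path_comp e s && ((z == head z s) || (z == last z s)).
Proof.
case/hasP => s sS /orP[h|h]; first by right; exists s.
by left; apply/hasP; exists s.
Qed.

Lemma ends_V1 P x : P \in S -> path_comp e P -> V1 e S (head x P) /\ V1 e S (last x P).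
Proof.
move=> PS pc; case: P PS pc => [|y P] PS pc; first by case/andP: pc.
by split; apply/hasP; exists (y :: P) => //; rewrite pc /= eqxx ?orbT.
Qed.

Lemma gc_ex x : gc x -> exists C y, [/\ C \in S, cycle_comp e C, y \in C,
   goes_to e S x y & e x y].
Proof.
case/existsP => y /andP[g /hasP[C CS /andP[cc yC]]]; exists C, y; split => //.
by case/and3P: g => _ _ /andP[/and3P[]].
Qed.

Lemma end_last s z : s \in S -> path_comp e s -> (z == head z s) || (z == last z s) ->
  exists Zs, [/\ perm_eq Zs s, gp Zs & forall d, last d Zs = z].
Proof.
move=> sS pc /orP[/eqP h|/eqP h]; have ne : s != [::] by case: s {h sS} pc.
  by exists (rev s); rewrite perm_rev gp_rev ?S_gp //; split=> // d; rewrite last_rev' h; exact: head_nd.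
by exists s; rewrite perm_refl S_gp //; split=> // d; rewrite h; exact: last_nd.
Qed.

Lemma end_head s z : s \in S -> path_comp e s -> (z == head z s) || (z == last z s) ->
  exists Zs, [/\ perm_eq Zs s, gp Zs & forall d, head d Zs = z].
Proof.
move=> sS pc h; case: (end_last sS pc h) => Zs [p g l].
by exists (rev Zs); rewrite perm_rev p gp_rev //; split=> // d; rewrite head_rev'.
Qed.

Lemma cyc_pathL C y : cycle_comp e C -> y \in C ->
  exists Zs, [/\ perm_eq Zs C, gp Zs & forall d, last d Zs = y].
Proof.
move=> cc yC; case: (cyc_path cc yC) => t [p g].
by exists (rev (y :: t)); rewrite perm_rev p gp_rev //; split=> // d; rewrite last_rev'.
Qed.

Lemma cyc_pathH C y : cycle_comp e C -> y \in C ->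
  exists Zs, [/\ perm_eq Zs C, gp Zs & forall d, head d Zs = y].
Proof.
move=> cc yC; case: (cyc_path cc yC) => t [p g].
by exists (y :: t); rewrite p.
Qed.

Lemma pc_ncc s : path_comp e s -> cycle_comp e s = false.
Proof. by case/andP => _ /negbTE. Qed.

End Part.

Lemma cnt_rcons (T : eqType) (a : pred T) s x : count a (rcons s x) = count a s + a x.
Proof. by rewrite -cats1 count_cat /= addn0. Qed.
Ltac genb := repeat match goal with |- context [nat_of_bool ?x] => generalize (nat_of_bool x); intro end.
Ltac gencnt := repeat match goal with |- context [count ?q ?s] => let k := fresh "k" in set k := count q s; clearbody k end.
Ltac fin := gencnt; genb; clear; lia.
Ltac cnt := do 4 (rewrite /= ?count_cat /= ?count_rev /= ?cnt_rcons /= ?cats0).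

Lemma head_cat_nd (T : eqType) (d : T) (s1 s2 : seq T) : s1 != [::] -> head d (s1 ++ s2) = head d s1.
Proof. by case: s1. Qed.
Lemma rev_nil (T : eqType) (b : T) G : rev (b :: G) != [::].
Proof. by rewrite rev_cons; case: (rev G). Qed.

Section Gap.
Variables (T : finType) (e : rel T).
Hypothesis e_sym : symmetric e.
Variable S : seq (seq T).
Hypothesis canS : canonical e S.
Notation gp := (is_gpath e).
Notation gc := (gc e S).

Lemma gap P L1 a G a' R1 : P \in S -> path_comp e P -> P = L1 ++ a :: G ++ a' :: R1 ->
  gc a -> gc a' -> G != [::] -> all (V2 e S) G -> all (predC gc) G -> False.
Proof.
move=> PS pc hP ga ga' hG hGv hGn.
have gP := S_gp canS PS.
have [v1h v1l] := ends_V1 a PS pc.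
have na := V2_nV1 (gc_V2 ga); have na' := V2_nV1 (gc_V2 ga').
case: L1 hP => [|l L1] hP; first by rewrite hP /= in v1h; rewrite v1h in na.
case/lastP: R1 hP => [|R1 r] hP.
  by move: v1l; rewrite hP /= !last_cat /= !last_cat /= => h; rewrite h in na'.
case: G hG hGv hGn hP => [//|b G] _ hGv hGn hP.
set b' := last b G.
have [C [y [CS cC yC _ ay]]] := gc_ex ga.
have [C' [y' [CS' cC' yC' _ ay']]] := gc_ex ga'.
have hb : b \in b :: G by rewrite inE eqxx.
have hb' : b' \in b :: G by rewrite mem_last.
have [z [v1z bz icz]] := V2_ex (allP hGv b hb).
have [z' [v1z' bz' icz']] := V2_ex (allP hGv b' hb').
have ngc : forall x, x \in b :: G -> ~~ gc x by move=> x hx; apply: (allP hGn x hx).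
have gpi : forall u, infix u P -> u != [::] -> gp u by move=> u; apply: gp_infix gP.
have PC : P != C by apply/eqP => h; move: cC; rewrite -h (pc_ncc pc).
have PC' : P != C' by apply/eqP => h; move: cC'; rewrite -h (pc_ncc pc).
have sym : forall u v, e u v -> e v u by move=> u v; rewrite e_sym.
have [Ce [pCe gCe lCe]] := cyc_pathL e_sym cC yC.
have [Ch' [pCh' gCh' hCh']] := cyc_pathH cC' yC'.
have [Ce' [pCe' gCe' lCe']] := cyc_pathL e_sym cC' yC'.
have gPL : gp (a :: rev (l :: L1)).
  rewrite -rev_rcons; apply: gp_rev => //.
  apply: gpi => //; apply/infixP; exists [::], (b :: G ++ a' :: rcons R1 r).
  by rewrite hP /= -?cats1 -?catA /= ?cats0 -?catA.
have gPR : gp (b :: G ++ a' :: rcons R1 r).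
  apply: gpi => //; apply/infixP; exists (rcons (l :: L1) a), [::].
  by rewrite hP /= -?cats1 -?catA /= ?cats0 -?catA.
have gPL2 : gp (l :: L1 ++ a :: b :: G).
  apply: gpi => //; apply/infixP; exists [::], (a' :: rcons R1 r).
  by rewrite hP /= -?cats1 -?catA /= ?cats0 -?catA.
have gPR2 : gp (a' :: rcons R1 r).
  apply: gpi => //; apply/infixP; exists (l :: L1 ++ a :: b :: G), [::].
  by rewrite hP /= -?cats1 -?catA /= ?cats0 -?catA.
have gGG : gp (b :: G).
  apply: gpi => //; apply/infixP; exists (rcons (l :: L1) a), (a' :: rcons R1 r).
  by rewrite hP /= -?cats1 -?catA /= ?cats0 -?catA.
have lP : forall d, last d P = r by move=> d; rewrite hP /= !last_cat /= !last_cat /= last_rcons.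
have hdP : forall d, head d P = l by move=> d; rewrite hP.
case: (V1_cases v1z) => [ic | [s sS /andP[pcs hz]]].
  by move: (ngc b hb); rewrite (icz ic).
case: (eqVneq s P) => [sP | sP].
  rewrite sP hdP lP in hz; case/orP: hz => /eqP hz.
    subst z.
    apply: (@fewer _ _ S canS [:: P; C] [:: Ce ++ (a :: rev (l :: L1)) ++ (b :: G ++ a' :: rcons R1 r)]) => //.
    - by rewrite /= inE PC.
    - by move=> x; rewrite !inE => /orP[]/eqP->.
    - apply/allP => ?; rewrite inE => /eqP ->; apply: (gp_cat (y:=a)) => //.
        apply: (gp_cat (y:=a)) => //.
        by rewrite /= last_rev' /= sym.
      by rewrite lCe /= sym.
    - apply/permP => q; rewrite hP; cnt; rewrite (permP pCe); fin.
  subst z.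
  have lPL2 : forall d, last d (l :: L1 ++ a :: b :: G) = b' by move=> d; rewrite /= last_cat.
  case: (V1_cases v1z') => [ic | [s' sS' /andP[pcs' hz']]].
    by move: (ngc b' hb'); rewrite (icz' ic).
  case: (eqVneq s' P) => [sP' | sP'].
    rewrite sP' hdP lP in hz'; case/orP: hz' => /eqP hz'; subst z'.
      apply: (@fewer _ _ S canS [:: P; C] [:: Ce ++ (a :: rev (l :: L1)) ++ rev (b :: G) ++ rev (a' :: rcons R1 r)]) => //.
      - by rewrite /= inE PC.
      - by move=> x; rewrite !inE => /orP[]/eqP->.
      - apply/allP => ?; rewrite inE => /eqP ->; apply: (gp_cat (y:=a)) => //.
          apply: (gp_cat (y:=a)) => //.
            apply: (gp_cat (y:=a)) => //; try exact: gp_rev.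
            by rewrite last_rev' head_rev' /= last_rcons.
          by rewrite /= last_rev' head_cat_nd ?rev_nil // head_rev' /= sym.
        by rewrite lCe /= sym.
      - apply/permP => q; rewrite hP; cnt; rewrite (permP pCe); fin.
    apply: (@fewer _ _ S canS [:: P; C'] [:: (l :: L1 ++ a :: b :: G) ++ rev (a' :: rcons R1 r) ++ Ch']) => //.
    - by rewrite /= inE PC'.
    - by move=> x; rewrite !inE => /orP[]/eqP->.
    - apply/allP => ?; rewrite inE => /eqP ->; apply: (gp_cat (y:=a)) => //.
        apply: (gp_cat (y:=a)) => //; first exact: gp_rev.
        by rewrite hCh' last_rev' /= ay'.
      by rewrite lPL2 head_cat_nd ?rev_nil // head_rev' /= last_rcons.
    - apply/permP => q; rewrite hP; cnt; rewrite (permP pCh'); fin.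
  have [Zs [pZ gZ hZ]] := end_head e_sym canS sS' pcs' hz'.
  have sC : s' != C' by apply/eqP => h; move: cC'; rewrite -h (pc_ncc pcs').
  apply: (@fewer _ _ S canS [:: P; C'; s'] [:: (l :: L1 ++ a :: b :: G) ++ Zs; Ce' ++ (a' :: rcons R1 r)]) => //.
  - by rewrite /= !inE !negb_or PC' eq_sym sP' /= andbT eq_sym.
  - by move=> x; rewrite !inE => /or3P[]/eqP->.
  - apply/allP => ?; rewrite !inE => /orP[]/eqP ->.
      by apply: (gp_cat (y:=a)) => //; rewrite hZ lPL2.
    by apply: (gp_cat (y:=a)) => //; rewrite lCe' /= sym.
  - apply/permP => q; rewrite hP; cnt; rewrite (permP pZ) (permP pCe'); fin.
have [Zs [pZ gZ lZ]] := end_last e_sym canS sS pcs hz.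
have sC : s != C by apply/eqP => h; move: cC; rewrite -h (pc_ncc pcs).
apply: (@fewer _ _ S canS [:: P; C; s] [:: Ce ++ (a :: rev (l :: L1)); Zs ++ (b :: G ++ a' :: rcons R1 r)]) => //.
- by rewrite /= !inE !negb_or PC eq_sym sP /= andbT eq_sym.
- by move=> x; rewrite !inE => /or3P[]/eqP->.
- apply/allP => ?; rewrite !inE => /orP[]/eqP ->.
    by apply: (gp_cat (y:=a)) => //; rewrite lCe /= sym.
  by apply: (gp_cat (y:=a)) => //; rewrite lZ /= sym.
- apply/permP => q; rewrite hP; cnt; rewrite (permP pZ) (permP pCe); fin.
Qed.
End Gap.

Section Consec.
Variables (T : finType) (e : rel T).
Hypothesis e_sym : symmetric e.
Variable S : seq (seq T).
Hypothesis canS : canonical e S.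
Notation gp := (is_gpath e).
Notation gc := (gc e S).

Lemma S_comp_uniq s : s \in S -> uniq s.
Proof.
move=> sS.
have sub : {subset [:: s] <= S} by move=> x; rewrite inE => /eqP->.
have := S_uf canS; rewrite (perm_uniq (perm_flatten (perm_decomp canS (isT : uniq [:: s]) sub))) /=.
by rewrite cat_uniq => /andP[].
Qed.

Variables (P : seq T).
Hypotheses (PS : P \in S) (pc : path_comp e P).

Lemma consec_gc Z A B : P = A ++ Z ++ B -> all (V2 e S) Z ->
  exists Y, infix Y Z /\ forall v, (v \in Y) = (v \in Z) && gc v.
Proof.
elim: Z A => [|z Z IH] A hP hV.
  by exists [::]; split => // v; rewrite in_nil.
have hP' : P = rcons A z ++ Z ++ B by rewrite hP cat_rcons.
case/andP: hV => Vz hV.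
have [Y' [iY mY]] := IH _ hP' hV.
have uP := S_comp_uniq PS.
have uZ : uniq (z :: Z).
  by apply: (infix_uniq _ uP); apply/infixP; exists A, B.
case gz: (gc z); last first.
  exists Y'; split.
    by apply: (infix_trans iY); apply: (suffix_infix [:: z]).
  move=> v; rewrite inE mY; case: (eqVneq v z) => [->|] //=.
  by rewrite gz !andbF.
case: Y' iY mY => [|y1 Y''] iY mY.
  exists [:: z]; split; first by apply/infixP; exists [::], Z.
  move=> v; rewrite !inE; case: (eqVneq v z) => [->|] //= _.
  by rewrite -mY.
case/infixP: iY => Q [R' hZ].
case: Q hZ => [|q Q] hZ.
  exists [:: z, y1 & Y'']; split; first by apply/infixP; exists [::], R'; rewrite hZ.
  move=> v; rewrite inE [in RHS]inE; case: (eqVneq v z) => [->|] //= _.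
exfalso.
have gy1 : gc y1 by move: (mY y1); rewrite inE eqxx /= => /esym/andP[].
apply: (@gap _ _ e_sym S canS P A z (q :: Q) y1 (Y'' ++ R' ++ B) PS pc) => //.
- by rewrite hP hZ /= -!catA /= -?catA.
- apply/allP => x hx; apply: (allP hV); rewrite hZ mem_cat hx.
  done.
- apply/allP => x hx /=; apply/negP => gx.
  have : x \in y1 :: Y'' by rewrite mY hZ mem_cat hx.
  have uZ2 : uniq Z by case/andP: uZ.
  move: uZ2; rewrite hZ cat_uniq => /and3P[_ h _] hy.
  by move/negP: h; apply; apply/hasP; exists x => //; rewrite mem_cat hy.
Qed.
End Consec.

Section Single.
Variables (T : finType) (e : rel T).
Hypothesis e_sym : symmetric e.
Variable S : seq (seq T).
Hypothesis canS : canonical e S.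
Notation gp := (is_gpath e).
Notation gc := (gc e S).

Lemma goes_e x y : goes_to e S x y -> e x y.
Proof. by case/and3P => _ _ /andP[/and3P[]]. Qed.

Variables (P : seq T).
Hypotheses (PS : P \in S) (pc : path_comp e P).

Lemma gpP_infix u : infix u P -> u != [::] -> gp u.
Proof. exact: gp_infix (S_gp canS PS). Qed.

Lemma adjK L1 u v R1 C C' y y' : P = L1 ++ u :: v :: R1 ->
  C \in S -> cycle_comp e C -> y \in C -> e u y ->
  C' \in S -> cycle_comp e C' -> y' \in C' -> e v y' -> C = C'.
Proof.
move=> hP CS cC yC uy CS' cC' yC' vy; apply/eqP/negPn/negP => ne.
have PC : P != C by apply/eqP => h; move: cC; rewrite -h (pc_ncc pc).
have PC' : P != C' by apply/eqP => h; move: cC'; rewrite -h (pc_ncc pc).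
have [Ch [pCh gCh hCh]] := cyc_pathH cC yC.
have [Ce' [pCe' gCe' lCe']] := cyc_pathL e_sym cC' yC'.
have g1 : gp (rcons L1 u).
  apply: gpP_infix; last by case: (L1).
  by apply/infixP; exists [::], (v :: R1); rewrite hP cat_rcons.
have g2 : gp (v :: R1).
  apply: gpP_infix => //; apply/infixP; exists (rcons L1 u), [::].
  by rewrite hP cats0 cat_rcons.
apply: (@fewer _ _ S canS [:: P; C; C'] [:: rcons L1 u ++ Ch; Ce' ++ (v :: R1)]) => //.
- by rewrite /= !inE !negb_or PC PC' ne.
- by move=> x; rewrite !inE => /or3P[]/eqP->.
- apply/allP => ?; rewrite !inE => /orP[]/eqP ->.
    by apply: (gp_cat (y:=u)) => //; rewrite hCh last_rcons.
  by apply: (gp_cat (y:=u)) => //; rewrite lCe' /= e_sym.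
- apply/permP => q; rewrite hP; cnt; rewrite (permP pCh) (permP pCe'); fin.
Qed.

Lemma adjH L1 u v R1 C N y y' : P = L1 ++ u :: v :: R1 ->
  C \in S -> cycle_comp e C -> perm_eq N C -> gp N ->
  (forall d, head d N = y) -> (forall d, last d N = y') -> e u y -> e v y' -> False.
Proof.
move=> hP CS cC pN gN hN lN uy vy.
have PC : P != C by apply/eqP => h; move: cC; rewrite -h (pc_ncc pc).
have g1 : gp (rcons L1 u).
  apply: gpP_infix; last by case: (L1).
  by apply/infixP; exists [::], (v :: R1); rewrite hP cat_rcons.
have g2 : gp (v :: R1).
  apply: gpP_infix => //; apply/infixP; exists (rcons L1 u), [::].
  by rewrite hP cats0 cat_rcons.
apply: (@fewer _ _ S canS [:: P; C] [:: rcons L1 u ++ N ++ (v :: R1)]) => //.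
- by rewrite /= inE PC.
- by move=> x; rewrite !inE => /orP[]/eqP->.
- apply/allP => ?; rewrite inE => /eqP ->.
  apply: (gp_cat (y:=u)) => //.
    by apply: (gp_cat (y:=u)) => //; rewrite lN /= e_sym.
  by rewrite last_rcons head_cat_nd ?hN ?(gp_nil gN).
- apply/permP => q; rewrite hP; cnt; rewrite (permP pN); fin.
Qed.

Definition adjrel (Y : seq T) := forall Y1 u v Y2, Y = Y1 ++ u :: v :: Y2 ->
  exists L1 R1, P = L1 ++ u :: v :: R1.

Lemma adjrel_infix Y : infix Y P -> adjrel Y.
Proof.
case/infixP => A [B hP] Y1 u v Y2 hY; exists (A ++ Y1), (Y2 ++ B).
by rewrite hP hY -!catA.
Qed.

Lemma chain rest x v C : adjrel (x :: v :: rest) -> all gc (x :: v :: rest) ->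
  C \in S -> cycle_comp e C -> (exists2 y, y \in C & e x y) ->
  forall w, w \in x :: v :: rest -> forall y, goes_to e S w y -> in_cycle_comp e S y -> y \in C.
Proof.
elim: rest x v => [|z rest IH] x v adj hg CS cC [y0 y0C xy0].
all: have [L1 [R1 hP]] := adj [::] x v _ erefl.
all: have gv : gc v by move: hg => /= /and3P[].
all: have [Cv [yv [CvS cCv yvC _ vyv]]] := gc_ex gv.
all: have eC : C = Cv by apply: (adjK hP CS cC y0C xy0 CvS cCv yvC vyv).
all: have key : forall w y, (w = x \/ w = v) -> goes_to e S w y -> in_cycle_comp e S y -> y \in C;
  [ move=> w y hw gy /hasP[Cy CyS /andP[cCy yCy]]; have wy := goes_e gy;
    case: hw => ?; subst w;
    [ by have -> : C = Cy by rewrite eC; apply/esym: (adjK hP CyS cCy yCy wy CvS cCv yvC vyv)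
    | by have -> : C = Cy by apply: (adjK hP CS cC y0C xy0 CyS cCy yCy wy) ] | ].
  by move=> w; rewrite !inE => /orP[]/eqP -> y; apply: key; [left|right].
move=> w; rewrite inE => /orP[/eqP -> |hw]; first by move=> y; apply: key; left.
apply: (IH v z) => //.
- by move=> Y1 u u' Y2 hY; apply: (adj (x :: Y1)); rewrite hY.
- by case/andP: hg.
- by exists yv; rewrite ?eC.
Qed.
End Single.

Fixpoint subs (s : seq nat) : seq (seq nat) :=
  if s is x :: s' then let r := subs s' in r ++ map (cons x) r else [:: [::]].

Lemma filter_subs p s : filter p s \in subs s.
Proof.
elim: s => [|x s IH] /=; first by rewrite inE.
by case: (p x); rewrite mem_cat ?IH // map_f ?orbT.
Qed.

Definition compl n (la lb : seq nat) :=
  all (fun i => all (fun j => ((i.+1 %% n) != j) && ((j.+1 %% n) != i)) lb) la.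
Definition condl n (la lb : seq nat) :=
  (size la + size lb <= n) && ((lb == [::]) || (4 * size la + 2 * size lb <= 3 * n)).
Definition checkn n := all (fun la => all (fun lb => compl n la lb ==> condl n la lb)
  (subs (iota 0 n))) (subs (iota 0 n)).

Lemma check_ok n : 3 <= n <= 6 -> checkn n.
Proof.
case: n => [|[|[|[|[|[|[|n]]]]]]] // _; vm_compute; reflexivity.
Qed.

Lemma brute n la lb : 3 <= n <= 6 -> la \in subs (iota 0 n) -> lb \in subs (iota 0 n) ->
  compl n la lb -> condl n la lb.
Proof.
move=> hn ha hb; have := check_ok hn; move/allP/(_ _ ha)/allP/(_ _ hb).
by move/implyP.
Qed.

Lemma compl_sym n a b : compl n a b -> compl n b a.
Proof.
move=> h; apply/allP => j hj; apply/allP => i hi.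
by have := allP (allP h i hi) j hj; rewrite andbC.
Qed.

Lemma ham_adj (T : finType) (e : rel T) (H : seq T) y0 i : cycle e H -> i < size H ->
  exists N, [/\ perm_eq N H, is_gpath e N,
     forall d, head d N = nth y0 H (i.+1 %% size H) & forall d, last d N = nth y0 H i].
Proof.
move=> cH hi; exists (rot i.+1 H); split.
- by rewrite perm_rot.
- have ne : rot i.+1 H != [::] by rewrite -size_eq0 size_rot; case: (size H) hi.
  move: cH ne; rewrite -(rot_cycle i.+1).
  case: (rot i.+1 H) => [//|x s] /= + _; rewrite rcons_path => /andP[] //.
- move=> d; case: (ltngtP i.+1 (size H)) => h; [ | lia | ].
    rewrite modn_small // /rot head_cat_nd; last by rewrite -size_eq0 size_drop subn_eq0 -ltnNge.
    by rewrite -nth0 nth_drop addn0 (set_nth_default y0).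
  by rewrite h rot_size modnn; case: (H) hi.
- move=> d; case: (ltngtP i.+1 (size H)) => h; [ | lia | ].
    by rewrite /rot last_cat (take_nth y0) // last_rcons.
  rewrite h rot_size (_ : i = (size H).-1) ?nth_last; last by rewrite -h.
  by apply: last_nd; case: (H) hi.
Qed.

Lemma seqb (T : eqType) (w : T -> nat) c (Y : seq T) : 2 <= size Y ->
  (forall Y1 u v Y2, Y = Y1 ++ u :: v :: Y2 ->
     [/\ w u + w v <= c, 4 * w u + 2 * w v <= 3 * c & 4 * w v + 2 * w u <= 3 * c]) ->
  2 * (\sum_(i <- Y) w i) <= size Y * c.
Proof.
move: (leqnn (size Y)); move: {2}(size Y) => n.
elim: n Y => [|n IH] Y hs h2 hadj.
  by move: h2; rewrite leqn0 in hs; rewrite (eqP hs).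
case: Y hs h2 hadj => [|u [|v [|z rest]]] //= hs _ hadj.
  have [h1 _ _] := hadj [::] u v [::] erefl.
  rewrite !big_cons big_nil; lia.
case: rest hs hadj => [|z' rest] hs hadj.
  have [_ h1 h2] := hadj [::] u v [:: z] erefl.
  have [_ h3 h4] := hadj [:: u] v z [::] erefl.
  rewrite !big_cons big_nil; lia.
have [h1 _ _] := hadj [::] u v [:: z, z' & rest] erefl.
have hr : size [:: z, z' & rest] <= n by move: hs => /=; lia.
have ha : forall Y1 a b Y2, [:: z, z' & rest] = Y1 ++ a :: b :: Y2 ->
     [/\ w a + w b <= c, 4 * w a + 2 * w b <= 3 * c & 4 * w b + 2 * w a <= 3 * c].
  by move=> Y1 a b Y2 hY; apply: (hadj [:: u, v & Y1]); rewrite hY.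
have := IH _ hr isT ha.
rewrite (big_cons _ _ u) (big_cons _ _ v) /= => h; lia.
Qed.

Theorem mainTheorem11 (T : finType) (e : rel T)
  (e_sym : symmetric e) (e_irr : irreflexive e)
  (reg6 : forall v : T, #|[set w | e v w]| = 6)
  (S : seq (seq T)) (canS : canonical e S)
  (P : seq T) (PS : P \in S) (Ppath : path_comp e P)
  (X : seq T) (XP : infix X P || infix X (rev P)) (Xsize : 2 <= size X)
  (XV2b : all (V2b e S) X) :
  2 <= #|Xprime e S X| ->
  (exists Y : seq T, infix Y P /\ forall v : T, (v \in Y) = (v \in Xprime e S X)) /\
  (exists2 C : seq T, C \in S &
     [/\ cycle_comp e C,
         (forall x y : T, x \in Xprime e S X -> goes_to e S x y ->
            in_cycle_comp e S y -> y \in C)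
       & (size C <= 6 ->
           2 * #|[set p : T * T | [&& p.1 \in Xprime e S X, p.2 \in C
                                   & balanced e S p.1 p.2]]|
             <= #|Xprime e S X| * size C)]).
Proof.
move=> hX2.
set Xs := Xprime e S X.
have memX : forall x, (x \in Xs) = (x \in X) && gc e S x by move=> x; rewrite inE.
have XV2 : all (V2 e S) X by apply/allP => x /(allP XV2b) /andP[].
have [X0 [iX0 mX0 V2X0]] : exists X0, [/\ infix X0 P, X0 =i X & all (V2 e S) X0].
  case/orP: XP => h; first by exists X.
  exists (rev X); split => //; first by rewrite infix_revLR.
    by move=> v; rewrite mem_rev.
  by rewrite all_rev.
have [Y [iY mY]] : exists Y, infix Y X0 /\ forall v, (v \in Y) = (v \in X0) && gc e S v.
  by case/infixP: iX0 => A [B hP]; apply: (consec_gc e_sym canS PS Ppath hP V2X0).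
have iYP : infix Y P := infix_trans iY iX0.
have mYX : forall v, (v \in Y) = (v \in Xs) by move=> v; rewrite mY memX mX0.
have uP := S_comp_uniq canS PS.
have uY : uniq Y := infix_uniq iYP uP.
have szY : #|Xs| = size Y.
  by rewrite -(card_uniqP uY); apply: eq_card => v; rewrite mYX.
have gY : all (gc e S) Y by apply/allP => v; rewrite mY => /andP[].
split; first by exists Y.
have adjY := adjrel_infix iYP.
case: Y hX2 mY iY iYP mYX uY szY gY adjY => [|x0 [|x1 rest]] hX2 mY iY iYP mYX uY szY gY adjY;
  try by move: hX2; rewrite -/Xs szY.
have [C [y0 [CS cC y0C _ xy0]]] := gc_ex (allP gY x0 (mem_head _ _)).
have allC : forall x y, x \in Xs -> goes_to e S x y -> in_cycle_comp e S y -> y \in C.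
  move=> x y; rewrite -mYX => hx.
  apply: (chain e_sym canS PS Ppath adjY gY CS cC _ hx).
  by exists y0.
exists C => //; split => //.
move=> hC6.
set Yl := [:: x0, x1 & rest] in mY iY iYP mYX uY szY gY adjY.
have [H pH cH] : exists2 H, perm_eq H C & cycle e H.
  by case/andP: cC => _ /hasP[H]; rewrite mem_permutations => pH cH; exists H.
have uH : uniq H by rewrite (perm_uniq pH) (S_comp_uniq canS CS).
have szC : size C = size H by rewrite (perm_size pH).
set c := size H.
have c3 : 3 <= c <= 6 by case/andP: cC => h _; rewrite /c -szC h hC6.
pose L x := filter (fun k => balanced e S x (nth y0 H k)) (iota 0 c).
have cntL : forall x, count (balanced e S x) H = size (L x).
  by move=> x; rewrite /L size_filter -{1}(mkseq_nth y0 H) /mkseq count_map.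
have compat : forall L1 u v R1, P = L1 ++ u :: v :: R1 -> compl c (L u) (L v).
  move=> L1 u v R1 hP; apply/allP => i; rewrite mem_filter mem_iota => /andP[bi /andP[_ ic]].
  apply/allP => j; rewrite mem_filter mem_iota => /andP[bj /andP[_ jc]].
  have ui : e u (nth y0 H i) by case/andP: bi => /and3P[].
  have vj : e v (nth y0 H j) by case/andP: bj => /and3P[].
  apply/andP; split; apply/eqP => hij.
    have [N [pN gN hN lN]] := ham_adj y0 cH ic.
    apply: (adjH e_sym canS PS Ppath hP CS cC (N := rev N)).
    - by rewrite perm_rev (perm_trans pN pH).
    - exact: gp_rev.
    - by move=> d; rewrite head_rev' lN.
    - by move=> d; rewrite last_rev' hN hij.
    - exact: ui.
    - exact: vj.
  have [N [pN gN hN lN]] := ham_adj y0 cH jc.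
  apply: (adjH e_sym canS PS Ppath hP CS cC (N := N)).
  - by rewrite (perm_trans pN pH).
  - exact: gN.
  - by move=> d; rewrite hN hij.
  - exact: lN.
  - exact: ui.
  - exact: vj.
have ne : forall v, v \in Yl -> L v != [::].
  move=> v hv; have [C' [y [CS' cC' yC' gy _]]] := gc_ex (allP gY v hv).
  have yC : y \in C.
    apply: (allC v y) => //; first by rewrite -mYX.
    by apply/hasP; exists C'; rewrite // cC'.
  have yH : y \in H by rewrite (perm_mem pH).
  rewrite -size_eq0 -cntL -lt0n -has_count; apply/hasP; exists y => //.
  by case/and3P: gy.
have card_eq : #|[set p : T * T | [&& p.1 \in Xs, p.2 \in C & balanced e S p.1 p.2]]|
   = \sum_(i <- Yl) size (L i).
  rewrite -sum1_card big_mkcond /=.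
  rewrite (eq_bigr (fun p : T * T => (if [&& p.1 \in Xs, p.2 \in C & balanced e S p.1 p.2] then 1 else 0))); last by move=> p _; rewrite inE.
  rewrite -(pair_bigA _ (fun i j => if [&& i \in Xs, j \in C & balanced e S i j] then 1 else 0)) /=.
  rewrite [RHS]big_uniq // [RHS]big_mkcond /=.
  apply: eq_bigr => i _.
  rewrite mYX; case: (i \in Xs); last by rewrite big1.
  rewrite -cntL -sum1_count [RHS]big_mkcond /= [RHS]big_uniq // [RHS]big_mkcond /=.
  by apply: eq_bigr => j _; rewrite (perm_mem pH); case: (j \in C).
rewrite card_eq szY szC.
apply: seqb => // Y1 u v Y2 hY.
have [L1 [R1 hP]] := adjY Y1 u v Y2 hY.
have hu : u \in Yl by rewrite hY mem_cat inE eqxx orbT.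
have hv : v \in Yl by rewrite hY mem_cat !inE eqxx !orbT.
have cuv := compat _ _ _ _ hP.
have /andP[h1 /orP[/eqP h2|h2]] := brute c3 (filter_subs _ _) (filter_subs _ _) cuv.
  by move: (ne v hv); rewrite /L h2.
have /andP[_ /orP[/eqP h3|h3]] := brute c3 (filter_subs _ _) (filter_subs _ _) (compl_sym cuv).
  by move: (ne u hu); rewrite /L h3.
split => //; lia.
Qed.
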